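(* Let $\Sigma$ be an alphabet with $|\Sigma|\ge 2$, let $n\ge 2$ and $L\ge 1$ be integers, and let $\mathcal{H}$ be a finite family of functions $\Sigma^n\to[0,2^L)$ such that every $h\in\mathcal{H}$ is recursive. Then $\mathcal{H}$ is not $3$-wise trailing-zero independent.
   Context: An $n$-gram is an element $(x_1,\dots,x_n)\in\Sigma^n$. A hash function $h:\Sigma^n\to[0,2^L)$ is recursive if there is a function $F$ (which may depend on $h$) such that $h(x_2,\dots,x_{n+1})=F(h(x_1,\dots,x_n),x_1,x_{n+1})$ for all $x_1,\dots,x_{n+1}\in\Sigma$. For an integer $y\in[0,2^L)$, $\mathrm{zeros}(y)\in\{0,1,\dots,L\}$ denotes the number of trailing zeros in the $L$-bit binary representation of $y$, with $\mathrm{zeros}(0)=L$. With $h$ drawn uniformly at random from $\mathcal{H}$, the family is $k$-wise trailing-zero independent if for all pairwise distinct $n$-grams $x_1,\dots,x_k$ and all $j_1,\dots,j_k\in\{0,1,\dots,L\}$ one has $P(\mathrm{zeros}(h(x_1))\ge j_1\wedge\cdots\wedge \mathrm{zeros}(h(x_k))\ge j_k)=2^{-j_1-\cdots-j_k}$. *)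

(* Defs.v *)
From HB Require Import structures.
From mathcomp Require Import all_boot all_order all_algebra.
Set Implicit Arguments. Unset Strict Implicit. Unset Printing Implicit Defensive.
Import Order.TTheory GRing.Theory Num.Theory.

Definition ngram (S : finType) (n : nat) := {ffun 'I_n -> S}.

Definition hashfun (S : finType) (n L : nat) := {ffun ngram S n -> 'I_(2 ^ L)}.

(* trailing zeros of the L-bit representation of y; zeros 0 = L.
   For 0 < y, logn 2 y is the 2-adic valuation = number of trailing zeros. *)
Definition zeros (L y : nat) : nat := if y == 0 then L else logn 2 y.

(* the windows (x_1..x_n) and (x_2..x_{n+1}) of x = (x_1..x_{n+1}) *)
Definition win_first (S : finType) (n : nat) (x : ngram S n.+1) : ngram S n :=
  [ffun i : 'I_n => x (widen_ord (leqnSn n) i)].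
Definition win_second (S : finType) (n : nat) (x : ngram S n.+1) : ngram S n :=
  [ffun i : 'I_n => x (lift ord0 i)].

Definition recursive (S : finType) (n L : nat) (h : hashfun S n L) : Prop :=
  exists F : 'I_(2 ^ L) -> S -> S -> 'I_(2 ^ L),
    forall x : ngram S n.+1,
      h (win_second x) = F (h (win_first x)) (x ord0) (x ord_max).

Definition prob (S : finType) (n L : nat) (H : {set hashfun S n L})
  (E : pred (hashfun S n L)) : rat :=
  ((#|[set h in H | E h]|)%:R / (#|H|)%:R)%R.

Definition tz_indep (S : finType) (n L k : nat) (H : {set hashfun S n L}) : Prop :=
  forall (x : 'I_k -> ngram S n) (j : 'I_k -> nat),
    injective x -> (forall i, j i <= L) ->
    prob H (fun h => [forall i : 'I_k, j i <= zeros L (h (x i))]) =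
      (1 / 2%:R ^+ (\sum_(i < k) j i))%R.

(* Main.v *)
Require Import Defs.
From HB Require Import structures.
From mathcomp Require Import all_boot all_order all_algebra.
Set Implicit Arguments. Unset Strict Implicit. Unset Printing Implicit Defensive.
Import Order.TTheory GRing.Theory Num.Theory.

Definition gw (S : finType) (a b : S) (m k : nat) : {ffun 'I_m -> S} :=
  [ffun i : 'I_m => if i < k then a else b].

Lemma gw_inj (S : finType) (a b : S) m k1 k2 :
  a != b -> k1 <= m -> k2 <= m -> gw a b m k1 = gw a b m k2 -> k1 = k2.
Proof.
move=> ab h1 h2 E.
wlog lt12 : k1 k2 h1 h2 E / k1 < k2.
  move=> W; case: (ltngtP k1 k2) => // c.
  - exact: W.
  - by symmetry; apply: W.
have km : k1 < m by apply: leq_trans lt12 h2.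
have := congr1 (fun f : {ffun 'I_m -> S} => f (Ordinal km)) E.
rewrite /= !ffunE /= ltnn lt12 => eba.
by move: ab; rewrite eba eqxx.
Qed.

Lemma zeros_ge (L : nat) (y : 'I_(2 ^ L)) : (L <= zeros L y) = (val y == 0).
Proof.
rewrite /zeros; case: (eqVneq (nat_of_ord y) 0) => [y0|y0]; first by rewrite leqnn.
rewrite ?(negbTE y0).
apply/negbTE; rewrite -ltnNge.
have y0' : 0 < y by rewrite lt0n.
have d := dvdn_leq y0' (pfactor_dvdnn 2 y).
by rewrite -(ltn_exp2l _ _ (isT : 1 < 2)); apply: leq_ltn_trans d (ltn_ord y).
Qed.

Lemma win_gw (S : finType) (a b : S) n k :
  win_first (gw a b n.+1 k) = gw a b n k /\
  win_second (gw a b n.+1 k) = gw a b n k.-1.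
Proof.
split; apply/ffunP => i; rewrite !ffunE //=.
by case: k => [|k] //=; rewrite ltnS.
Qed.

Theorem mainTheorem1 (S : finType) (n L : nat) (H : {set hashfun S n L}) :
  1 < #|S| -> 2 <= n -> 1 <= L ->
  (forall h, h \in H -> recursive h) ->
  ~ tz_indep 3 H.
Proof.
move=> /card_gt1P [a [b [_ _ ab]]] n2 L1 Hrec Hind.
pose x (i : 'I_3) := gw a b n (n - i).
have xinj : injective x.
  move=> i1 i2 /gw_inj => /(_ ab (leq_subr _ _) (leq_subr _ _)) E.
  apply: val_inj => /=.
  have l1 : i1 <= n by apply: leq_trans n2; rewrite -ltnS ltn_ord.
  have l2 : i2 <= n by apply: leq_trans n2; rewrite -ltnS ltn_ord.
  by rewrite -(subKn l1) -(subKn l2) E.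
have key : forall h, h \in H -> h (x ord0) = h (x (inord 1)) ->
    h (x (inord 2)) = h (x (inord 1)).
  move=> h hH E; have [F HF] := Hrec h hH.
  have x0 : x ord0 = gw a b n n by rewrite /x subn0.
  have x1 : x (inord 1) = gw a b n n.-1 by rewrite /x inordK // subn1.
  have x2 : x (inord 2) = gw a b n n.-2 by rewrite /x inordK // subn2.
  have [f1 s1] := win_gw a b n n.
  have [f2 s2] := win_gw a b n n.-1.
  have e1 := HF (gw a b n.+1 n).
  have e2 := HF (gw a b n.+1 n.-1).
  rewrite f1 s1 in e1; rewrite f2 s2 in e2.
  have o0 : forall k, 0 < k -> gw a b n.+1 k ord0 = a by move=> k k0; rewrite ffunE k0.
  have om : forall k, k <= n -> gw a b n.+1 k ord_max = b.
    by move=> k kn; rewrite ffunE /= ltnNge kn.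
  rewrite x0 x1 x2 in E *.
  have p1 : 0 < n.-1 by rewrite -ltnS (ltn_predK n2).
  have p0 : 0 < n by apply: leq_trans n2.
  rewrite e2 {2}e1 -E !o0 // !om //; exact: leq_pred.
pose j1 (i : 'I_3) := L.
pose j2 (i : 'I_3) := if val i == 2 then 0 else L.
have P1 := Hind x j1 xinj (fun _ => leqnn L).
have P2 := Hind x j2 xinj (fun i => ltac:(rewrite /j2; case: ifP => //)).
have sets : [set h in H | [forall i : 'I_3, j1 i <= zeros L (h (x i))]] =
            [set h in H | [forall i : 'I_3, j2 i <= zeros L (h (x i))]].
  apply/setP => g; rewrite !inE; case gH : (g \in H) => //=.
  apply/forallP/forallP => A i.
  - by rewrite /j2; case: ifP => // _; apply: A.
  - have A0 := A ord0; have A1 := A (inord 1).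
    rewrite /j2 /= inordK //= in A0 A1; rewrite /j1 !zeros_ge in A0 A1 *.
    have E : g (x ord0) = g (x (inord 1)) by apply: val_inj; rewrite (eqP A0) (eqP A1).
    case: i => [[|[|[|k]]] Hk] //.
    + by rewrite (_ : Ordinal Hk = inord 1) //; apply: val_inj; rewrite /= inordK.
    + by rewrite (_ : Ordinal Hk = inord 2) ?key ?gH //; apply: val_inj; rewrite /= inordK.
move: P1 P2; rewrite /prob sets => -> .
rewrite /j1 /j2 !big_ord_recr !big_ord0 /= => E.
move/(congr1 (fun r : rat => (r^-1)%R)): E; rewrite !div1r !invrK.
rewrite -!natrX => /eqP; rewrite eqr_nat eqn_exp2l // addn0 !add0n.
rewrite -{2}(addn0 (L + L)) eqn_add2l => /eqP L0.
by rewrite L0 in L1.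
Qed.
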